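(* Let $X$ be a Hilbert space and let $T:X\rightrightarrows X$ be semilocally monotone on $X$ (i.e., semilocally monotone at every point of $\operatorname{dom}T$), and suppose $\operatorname{dom}T$ is convex. Then $T$ is (globally) monotone on $X$.
   Context: $X$ is a real Hilbert space. For $T:X\rightrightarrows X$, $\operatorname{dom}T=\{u:T(u)\ne\emptyset\}$, $\operatorname{gph}T=\{(u,v):v\in T(u)\}$. $T$ is monotone if $\langle v_1-v_2,u_1-u_2\rangle\ge0$ for all $(u_1,v_1),(u_2,v_2)\in\operatorname{gph}T$. $T$ is semilocally monotone at $\bar u\in\operatorname{dom}T$ if there is a neighborhood $U$ of $\bar u$ in $X$ such that $\langle v_1-v_2,u_1-u_2\rangle\ge0$ for all $(u_1,v_1),(u_2,v_2)\in\operatorname{gph}T\cap(U\times X)$. *)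

(* Defs.v *)
From Stdlib Require Import Reals.
Open Scope R_scope.

Record HilbertSpace := {
  hs_car :> Type;
  hs_zero : hs_car;
  hs_add : hs_car -> hs_car -> hs_car;
  hs_opp : hs_car -> hs_car;
  hs_scal : R -> hs_car -> hs_car;
  hs_inner : hs_car -> hs_car -> R;
  hs_addA : forall x y z, hs_add x (hs_add y z) = hs_add (hs_add x y) z;
  hs_addC : forall x y, hs_add x y = hs_add y x;
  hs_add0 : forall x, hs_add x hs_zero = x;
  hs_addN : forall x, hs_add x (hs_opp x) = hs_zero;
  hs_scal1 : forall x, hs_scal 1 x = x;
  hs_scalA : forall a b x, hs_scal a (hs_scal b x) = hs_scal (a * b) x;
  hs_scalDr : forall a x y, hs_scal a (hs_add x y) = hs_add (hs_scal a x) (hs_scal a y);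
  hs_scalDl : forall a b x, hs_scal (a + b) x = hs_add (hs_scal a x) (hs_scal b x);
  hs_innerC : forall x y, hs_inner x y = hs_inner y x;
  hs_innerDl : forall x y z, hs_inner (hs_add x y) z = hs_inner x z + hs_inner y z;
  hs_innerZl : forall a x y, hs_inner (hs_scal a x) y = a * hs_inner x y;
  hs_inner_ge0 : forall x, 0 <= hs_inner x x;
  hs_inner_eq0 : forall x, hs_inner x x = 0 -> x = hs_zero;
  hs_complete : forall u : nat -> hs_car,
    (forall eps, 0 < eps -> exists N, forall m n, (N <= m)%nat -> (N <= n)%nat ->
        sqrt (hs_inner (hs_add (u m) (hs_opp (u n))) (hs_add (u m) (hs_opp (u n)))) < eps) ->
    exists l, forall eps, 0 < eps -> exists N, forall n, (N <= n)%nat ->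
        sqrt (hs_inner (hs_add (u n) (hs_opp l)) (hs_add (u n) (hs_opp l))) < eps
}.

Arguments hs_add {h}.
Arguments hs_opp {h}.
Arguments hs_scal {h}.
Arguments hs_inner {h}.

Definition hs_sub {X : HilbertSpace} (x y : X) : X := hs_add x (hs_opp y).
Definition hs_norm {X : HilbertSpace} (x : X) : R := sqrt (hs_inner x x).

(* A set-valued map T : X ⇉ X is represented by its graph: T u v  <->  v ∈ T(u). *)
Definition setvalued (X : HilbertSpace) := X -> X -> Prop.

Definition dom {X : HilbertSpace} (T : setvalued X) (u : X) : Prop := exists v, T u v.

Definition convex {X : HilbertSpace} (C : X -> Prop) : Prop :=
  forall x y t, C x -> C y -> 0 <= t <= 1 ->
    C (hs_add (hs_scal t x) (hs_scal (1 - t) y)).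

Definition neighborhood {X : HilbertSpace} (U : X -> Prop) (ubar : X) : Prop :=
  exists r, 0 < r /\ forall x, hs_norm (hs_sub x ubar) < r -> U x.

Definition monotone {X : HilbertSpace} (T : setvalued X) : Prop :=
  forall u1 v1 u2 v2, T u1 v1 -> T u2 v2 ->
    0 <= hs_inner (hs_sub v1 v2) (hs_sub u1 u2).

Definition semilocally_monotone_at {X : HilbertSpace} (T : setvalued X) (ubar : X) : Prop :=
  dom T ubar /\
  exists U : X -> Prop, neighborhood U ubar /\
    forall u1 v1 u2 v2, T u1 v1 -> T u2 v2 -> U u1 -> U u2 ->
      0 <= hs_inner (hs_sub v1 v2) (hs_sub u1 u2).

(* Main.v *)
Require Import Defs.
From Stdlib Require Import Reals.
From Stdlib Require Import Lra Psatz Classical ClassicalEpsilon.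
Open Scope R_scope.

Section H.
Variable X : HilbertSpace.

Lemma hs_add0l (x : X) : hs_add (hs_zero X) x = x.
Proof. rewrite hs_addC; apply hs_add0. Qed.

Lemma hs_scal0 (x : X) : hs_scal 0 x = hs_zero X.
Proof.
  set (y := hs_scal 0 x).
  assert (Hy : y = hs_add y y).
  { unfold y; rewrite <- hs_scalDl. f_equal; ring. }
  rewrite <- (hs_addN X y). rewrite Hy at 2.
  rewrite <- hs_addA, hs_addN, hs_add0. reflexivity.
Qed.

Lemma inner0l (y : X) : hs_inner (hs_zero X) y = 0.
Proof. rewrite <- (hs_scal0 (hs_zero X)), hs_innerZl; ring. Qed.

Lemma innerNl (x y : X) : hs_inner (hs_opp x) y = - hs_inner x y.
Proof.
  assert (H := inner0l y). rewrite <- (hs_addN X x), hs_innerDl in H. lra.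
Qed.

Lemma innerDr (x y z : X) : hs_inner x (hs_add y z) = hs_inner x y + hs_inner x z.
Proof. rewrite hs_innerC, hs_innerDl, (hs_innerC _ y), (hs_innerC _ z); ring. Qed.

Lemma innerZr (a : R) (x y : X) : hs_inner x (hs_scal a y) = a * hs_inner x y.
Proof. rewrite hs_innerC, hs_innerZl, hs_innerC; ring. Qed.

Lemma innerNr (x y : X) : hs_inner x (hs_opp y) = - hs_inner x y.
Proof. rewrite hs_innerC, innerNl, hs_innerC; ring. Qed.

End H.

Theorem lemma3p4 (X : HilbertSpace) (T : setvalued X)
  (Hsl : forall ubar : X, dom T ubar -> semilocally_monotone_at T ubar)
  (Hconv : convex (dom T)) :
  monotone T.
Proof.
  intros u1 v1 u2 v2 H1 H2.
  set (u := fun t : R => hs_add (hs_scal t u1) (hs_scal (1 - t) u2)).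
  assert (Hu0 : u 0 = u2).
  { unfold u. rewrite hs_scal0, hs_add0l. replace (1 - 0) with 1 by ring. apply hs_scal1. }
  assert (Hu1 : u 1 = u1).
  { unfold u. replace (1 - 1) with 0 by ring. rewrite hs_scal0, hs_add0, hs_scal1. reflexivity. }
  assert (Hdom : forall t, 0 <= t <= 1 -> dom T (u t)).
  { intros t Ht. apply Hconv; auto; [exists v1 | exists v2]; auto. }
  assert (Hex : forall t, exists w, (0 <= t <= 1 -> T (u t) w) /\ (t = 0 -> w = v2) /\ (t = 1 -> w = v1)).
  { intro t. destruct (Req_dec t 0) as [E|E].
    - exists v2. subst t. rewrite Hu0. split; [auto|split; [auto|intro; lra]].
    - destruct (Req_dec t 1) as [E'|E'].
      + exists v1. subst t. rewrite Hu1. split; [auto|split; [intro; lra|auto]].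
      + destruct (classic (0 <= t <= 1)) as [Ht|Ht].
        * destruct (Hdom t Ht) as [w Hw]. exists w. split; [auto|split; intro; lra].
        * exists v1. split; [intro; contradiction|split; intro; lra]. }
  set (w := fun t => proj1_sig (constructive_indefinite_description _ (Hex t))).
  assert (Hw : forall t, (0 <= t <= 1 -> T (u t) (w t)) /\ (t = 0 -> w t = v2) /\ (t = 1 -> w t = v1)).
  { intro t. unfold w. destruct (constructive_indefinite_description _ (Hex t)); simpl; auto. }
  set (f := fun t => hs_inner (w t) u1 - hs_inner (w t) u2).
  assert (Hexp : forall a b t t', hs_inner (hs_sub a b) (hs_sub (u t') (u t)) =
     (t' - t) * (hs_inner a u1 - hs_inner a u2 - hs_inner b u1 + hs_inner b u2)).
  { intros. unfold hs_sub, u.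
    repeat rewrite ?hs_innerDl, ?innerNl, ?innerDr, ?innerNr, ?innerZr.
    ring. }
  set (D := hs_inner u1 u1 - hs_inner u1 u2 - hs_inner u2 u1 + hs_inner u2 u2).
  assert (HD : 0 <= D).
  { assert (H := hs_inner_ge0 X (hs_sub u1 u2)). unfold hs_sub in H.
    rewrite !hs_innerDl, !innerNl, !innerDr, !innerNr in H. unfold D; lra. }
  assert (Hnorm : forall t s, hs_inner (hs_sub (u t) (u s)) (hs_sub (u t) (u s)) = (t - s)^2 * D).
  { intros. rewrite Hexp. unfold u, D.
    rewrite !hs_innerDl, !hs_innerZl. ring. }
  assert (Hloc : forall s, 0 <= s <= 1 -> exists d, 0 < d /\ forall t t', 0 <= t <= 1 -> 0 <= t' <= 1 ->
      Rabs (t - s) < d -> Rabs (t' - s) < d -> t <= t' -> f t <= f t').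
  { intros s Hs. destruct (Hsl (u s) (Hdom s Hs)) as [_ [U [[r [Hr HU]] HUm]]].
    exists (Rmin 1 (r * r / (D + 1))). split.
    { apply Rmin_pos; [lra|]. apply Rdiv_lt_0_compat; nra. }
    assert (Hin : forall t, Rabs (t - s) < Rmin 1 (r * r / (D + 1)) -> U (u t)).
    { intros t Ht. apply HU. unfold hs_norm. rewrite Hnorm.
      assert (Hm1 := Rmin_l 1 (r * r / (D + 1))). assert (Hm2 := Rmin_r 1 (r * r / (D + 1))).
      assert (Hq : (t - s)^2 < r * r / (D + 1)).
      { assert (Ha := Rabs_pos (t - s)). rewrite <- (pow2_abs (t - s)). nra. }
      assert (Hq2 : (t - s)^2 * (D + 1) < r * r).
      { apply Rmult_lt_compat_r with (r := D + 1) in Hq; [|lra].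
        unfold Rdiv in Hq. rewrite Rmult_assoc, Rinv_l, Rmult_1_r in Hq; lra. }
      rewrite <- (sqrt_square r) by lra. apply sqrt_lt_1_alt. split.
      - apply Rmult_le_pos; [apply pow2_ge_0|lra].
      - assert (0 <= (t - s)^2) by apply pow2_ge_0. nra. }
    intros t t' Ht Ht' Hd Hd' Htt.
    destruct (Req_dec t t') as [E|E]; [rewrite E; lra|].
    assert (Hm := HUm _ _ _ _ (proj1 (Hw t') Ht') (proj1 (Hw t) Ht) (Hin t' Hd') (Hin t Hd)).
    rewrite Hexp in Hm. unfold f.
    destruct (Rle_dec (hs_inner (w t) u1 - hs_inner (w t) u2) (hs_inner (w t') u1 - hs_inner (w t') u2)); [auto|].
    exfalso. nra. }
  set (A := fun s => 0 <= s <= 1 /\ forall t, 0 <= t <= s -> f 0 <= f t).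
  assert (HA0 : A 0). { split; [lra|]. intros t Ht. replace t with 0 by lra. lra. }
  assert (HAb : bound A). { exists 1. intros x [Hx _]. lra. }
  destruct (completeness A HAb (ex_intro _ 0 HA0)) as [c [Hub Hlub]].
  assert (Hc0 : 0 <= c) by (apply Hub; auto).
  assert (Hc1 : c <= 1). { apply Hlub. intros x [Hx _]. lra. }
  destruct (Hloc c (conj Hc0 Hc1)) as [d [Hd Hdm]].
  assert (Hs : exists s, A s /\ c - d < s).
  { destruct (classic (exists s, A s /\ c - d < s)) as [?|Hn]; auto.
    exfalso. assert (c <= c - d); [|lra]. apply Hlub. intros x Hx.
    destruct (Rle_dec x (c - d)); auto. exfalso; apply Hn; exists x; split; auto; lra. }
  destruct Hs as [s [[Hs01 Hs] Hsc]].
  assert (Hsc' : s <= c) by (apply Hub; split; auto).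
  set (c' := Rmin (c + d / 2) 1).
  assert (HAc' : A c').
  { assert (Rmin (c + d / 2) 1 <= c + d/2) by apply Rmin_l.
    assert (Rmin (c + d / 2) 1 <= 1) by apply Rmin_r.
    assert (0 <= Rmin (c + d / 2) 1) by (apply Rmin_glb; lra).
    split; [unfold c'; lra|]. intros t Ht. unfold c' in Ht.
    destruct (Rle_dec t s); [apply Hs; lra|].
    apply Rle_trans with (f s); [apply Hs; lra|].
    apply Hdm; try lra; apply Rabs_def1; lra. }
  assert (Hc'c : c' <= c) by (apply Hub; auto).
  assert (Hc'1 : c' = 1).
  { unfold c' in *. destruct (Rle_dec (c + d/2) 1).
    - rewrite Rmin_left in Hc'c; lra.
    - rewrite Rmin_right; lra. }
  destruct HAc' as [_ HAc']. rewrite Hc'1 in HAc'.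
  assert (Hf := HAc' 1 ltac:(lra)).
  assert (Hw0 := proj1 (proj2 (Hw 0)) eq_refl).
  assert (Hw1 := proj2 (proj2 (Hw 1)) eq_refl).
  unfold f in Hf. rewrite Hw0, Hw1 in Hf.
  unfold hs_sub. rewrite hs_innerDl, !innerNl, !innerDr, !innerNr. lra.
Qed.
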